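(* Let $X\in\mathbb{R}^{d\times d}$ with $X+X^\top$ positive definite, $\gamma\in(0,1)$, $\gamma_k=(k+1)^{-\gamma}$ for $k\ge0$. Let $q=\lambda_{\min}(X+X^\top)/4$, $\mu=-\lambda_{\min}(X+X^\top)+\lambda_{\max}(X^\top X)$, $K=\big\lceil\big(\lambda_{\max}(X^\top X)/(\lambda_{\min}(X+X^\top)-2q)\big)^{1/\gamma}\big\rceil$, and $$C=\max\Big\{1,\ \sqrt{\max_{0\le\ell_1\le\ell_2\le K}\prod_{\ell=\ell_1}^{\ell_2}e^{\gamma_\ell(\mu+2q)}}\Big\}.$$ Then for all integers $0\le i\le n$, $$\prod_{k=i}^{n}\|I-\gamma_kX\|\le C\,e^{-q\sum_{k=i}^n\gamma_k}.$$
   Context: $\|\cdot\|$ is the spectral norm; $\lambda_{\min},\lambda_{\max}$ denote smallest and largest eigenvalues. *)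

(* Defs.v *)
From Stdlib Require Import Reals Lra Lia ZArith ClassicalEpsilon.
Open Scope R_scope.

Fixpoint rsum (m : nat) (f : nat -> R) : R :=
  match m with O => 0 | S m' => rsum m' f + f m' end.
Fixpoint rprod (m : nat) (f : nat -> R) : R :=
  match m with O => 1 | S m' => rprod m' f * f m' end.
(* sum / product over k = i, ..., n (empty if n < i) *)
Definition rsum_range (i n : nat) (f : nat -> R) : R :=
  rsum (S n - i) (fun j => f (i + j)%nat).
Definition rprod_range (i n : nat) (f : nat -> R) : R :=
  rprod (S n - i) (fun j => f (i + j)%nat).
Fixpoint rmax_upto (m : nat) (f : nat -> R) : R :=
  match m with O => f O | S m' => Rmax (rmax_upto m' f) (f m) end.

(* d x d real matrices as functions of indices (only indices < d matter),
   vectors in R^d as functions nat -> R. *)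
Definition mat := nat -> nat -> R.
Definition vec := nat -> R.
Definition mtr (A : mat) : mat := fun i j => A j i.
Definition madd (A B : mat) : mat := fun i j => A i j + B i j.
Definition mscale (c : R) (A : mat) : mat := fun i j => c * A i j.
Definition mid : mat := fun i j => if Nat.eqb i j then 1 else 0.
Definition mmul (d : nat) (A B : mat) : mat :=
  fun i j => rsum d (fun k => A i k * B k j).
Definition mvec (d : nat) (A : mat) (v : vec) : vec :=
  fun i => rsum d (fun j => A i j * v j).
Definition vnorm (d : nat) (v : vec) : R := sqrt (rsum d (fun i => v i ^ 2)).
Definition nonzero (d : nat) (v : vec) : Prop := exists i, (i < d)%nat /\ v i <> 0.

Definition pos_def (d : nat) (M : mat) : Prop :=
  forall v, nonzero d v -> 0 < rsum d (fun i => v i * mvec d M v i).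

Definition is_eigenvalue (d : nat) (M : mat) (l : R) : Prop :=
  exists v, nonzero d v /\ forall i, (i < d)%nat -> mvec d M v i = l * v i.

(* smallest / largest eigenvalue (of a symmetric matrix, whose eigenvalues are real) *)
Definition lambda_min (d : nat) (M : mat) : R :=
  epsilon (inhabits 0) (fun l => is_eigenvalue d M l /\
                                 forall m, is_eigenvalue d M m -> l <= m).
Definition lambda_max (d : nat) (M : mat) : R :=
  epsilon (inhabits 0) (fun l => is_eigenvalue d M l /\
                                 forall m, is_eigenvalue d M m -> m <= l).

Definition spec_norm (d : nat) (A : mat) : R :=
  epsilon (inhabits 0)
    (is_lub (fun r => exists v, vnorm d v = 1 /\ r = vnorm d (mvec d A v))).

(* ceiling of a real, as a natural number (used for positive arguments) *)
Definition natceil (x : R) : nat := Z.to_nat (- Int_part (- x)).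

Definition gam (g : R) (k : nat) : R := Rpower (INR k + 1) (- g).

(* Main.v *)
Require Import Defs.
From Stdlib Require Import Reals.
From Stdlib Require Import Lra Lia ZArith ClassicalEpsilon Classical_Prop.
Open Scope R_scope.

Lemma rsum_ext m F G : (forall k, (k < m)%nat -> F k = G k) -> rsum m F = rsum m G.
Proof.
  induction m; intros H; simpl; auto.
  rewrite IHm by (intros; apply H; lia). rewrite (H m) by lia. reflexivity.
Qed.

Lemma rsum_nonneg m F : (forall k, 0 <= F k) -> 0 <= rsum m F.
Proof. induction m; intros H; simpl. lra. specialize (IHm H). specialize (H m). lra. Qed.

Lemma rsum_ge_term m F k : (forall k, 0 <= F k) -> (k < m)%nat -> F k <= rsum m F.
Proof.
  induction m; intros H Hk; simpl. lia.
  destruct (Nat.eq_dec k m). subst. pose proof (rsum_nonneg m F H). lra.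
  pose proof (IHm H ltac:(lia)). specialize (H m). lra.
Qed.

Lemma rsum_e0 m F : (1 <= m)%nat -> F 0%nat = 1 -> (forall k, (0 < k < m)%nat -> F k = 0) ->
  rsum m F = 1.
Proof.
  induction m; intros Hm H0 H. lia.
  simpl. destruct m. simpl. lra.
  rewrite IHm. rewrite H by lia. lra. lia. auto. intros; apply H; lia.
Qed.

Definition Qf (d : nat) (S : mat) (v : vec) : R := rsum d (fun i => v i * mvec d S v i).
Definition nsq (d : nat) (v : vec) : R := rsum d (fun i => v i ^ 2).

From HB Require structures.
From mathcomp Require all_boot all_order all_algebra.
From mathcomp Require all_classical all_reals all_analysis.
From mathcomp Require Rstruct Rstruct_topology.
Module MC.
Import structures.
Import all_boot all_order all_algebra.
Import all_classical all_reals all_analysis.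
Import Rstruct Rstruct_topology.
Import Order.TTheory GRing.Theory Num.Theory.
Import numFieldNormedType.Exports.
Local Open Scope classical_set_scope.

Section S.
Variable n : nat.
Definition vv (v : 'rV[R]_n.+1) : nat -> R :=
  fun k => if (k < n.+1)%N then v ord0 (inord k) else 0%R.

Lemma vv_cont k : continuous (fun v => vv v k).
Proof.
rewrite /vv; case: (k < n.+1)%N; last exact: cst_continuous.
exact: (@coord_continuous R 1 n.+1 ord0 (inord k)).
Qed.

Lemma rsum_cont m (F : nat -> 'rV[R]_n.+1 -> R) :
  (forall k, continuous (F k)) -> continuous (fun v => rsum m (fun k => F k v)).
Proof.
move=> HF; elim: m => [|m IH] /=; first exact: cst_continuous.
move=> x; apply: (@continuousD R R^o _ (fun v => rsum m (fun k => F k v)) (F m)).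
exact: IH. exact: HF.
Qed.

Lemma mul_cont (F G : 'rV[R]_n.+1 -> R) :
  continuous F -> continuous G -> continuous (fun v => Rmult (F v) (G v)).
Proof.
move=> HF HG x; exact: (@continuousM R _ F G x (HF x) (HG x)).
Qed.

Lemma vv_row (u : nat -> R) k : (k < n.+1)%N -> vv (\row_(j < n.+1) u (nat_of_ord j)) k = u k.
Proof. by move=> Hk; rewrite /vv Hk mxE inordK. Qed.

Lemma exists_min (S : mat) : exists w : vec,
  nsq n.+1 w = 1 /\ forall u, nsq n.+1 u = 1 -> Qf n.+1 S w <= Qf n.+1 S u.
Proof.
pose f := fun v => Qf n.+1 S (vv v).
pose g := fun v => nsq n.+1 (vv v).
have fc : continuous f.
  apply: rsum_cont => i; apply: mul_cont; first exact: vv_cont.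
  apply: rsum_cont => j; apply: mul_cont; first exact: cst_continuous.
  exact: vv_cont.
have gc : continuous g.
  apply: rsum_cont => i /=; apply: mul_cont; first exact: vv_cont.
  apply: mul_cont; first exact: vv_cont. exact: cst_continuous.
pose Sph := g @^-1` [set x | x = 1].
have Scl : closed Sph by apply: preimage_closed => //; exact: closed_eq.
have Ccomp := @rV_compact R n.+1 (fun=> `[(-1)%R, 1%R]%classic) (fun=> @segment_compact _ _ _).
have Scomp : compact Sph.
  apply: subclosed_compact Scl Ccomp _.
  move=> v Sv i /=.
  have : (vv v i) ^ 2 <= 1.
    rewrite -Sv; apply: (rsum_ge_term n.+1 (fun i => vv v i ^ 2)) => //.
    by move=> k; apply: pow2_ge_0.
    apply/ssrnat.ltP; exact: ltn_ord.
  have -> : vv v i = v ord0 i by rewrite /vv ltn_ord inord_val.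
  move=> H; rewrite in_itv /=; apply/andP; split; apply/RleP.
  change (Rle (Ropp (IZR 1)) (v ord0 i)); nra.
  change (Rle (v ord0 i) (IZR 1)); nra.
have S0 : Sph !=set0.
  exists (\row_(j < n.+1) (if nat_of_ord j == 0%N then 1 else 0))%R.
  rewrite /Sph /g /nsq. apply: (rsum_e0 n.+1).
  - apply/ssrnat.leP; done.
  - rewrite (vv_row (fun j => if j == 0%N then 1%R else 0%R)) //=; change (IZR 1 * (IZR 1 * 1) = 1); ring.
  - move=> k [Hk1 Hk2]; rewrite (vv_row (fun j => if j == 0%N then 1%R else 0%R)) /=; last by apply/ssrnat.ltP.
    case: eqP => [E|_]; first lia. change (IZR 0 * (IZR 0 * 1) = 0); ring.
have [c cS cmin] := EVT_min_rV S0 Scomp (continuous_subspaceT fc).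
exists (vv c); split; first by move: cS; rewrite inE.
move=> u Hu.
pose t := (\row_(j < n.+1) u (nat_of_ord j))%R.
have tS : t \in Sph.
  rewrite inE /Sph /g /= -Hu; apply: rsum_ext => k Hk.
  by rewrite vv_row //; apply/ssrnat.ltP.
have := cmin t tS; move/RleP; rewrite /f.
have -> : Qf n.+1 S (vv t) = Qf n.+1 S u; last by [].
apply: rsum_ext => k Hk; rewrite vv_row; last by apply/ssrnat.ltP.
congr (_ * _); apply: rsum_ext => j Hj; rewrite vv_row //; by apply/ssrnat.ltP.
Qed.
End S.
End MC.

Lemma exists_min d S : (1 <= d)%nat -> exists w : vec,
  nsq d w = 1 /\ forall u, nsq d u = 1 -> Qf d S w <= Qf d S u.
Proof. intros H. destruct d. lia. apply MC.exists_min. Qed.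

Lemma rsum_plus m F G : rsum m (fun k => F k + G k) = rsum m F + rsum m G.
Proof. induction m; simpl. lra. rewrite IHm. lra. Qed.

Lemma rsum_scal m c F : rsum m (fun k => c * F k) = c * rsum m F.
Proof. induction m; simpl. lra. rewrite IHm. lra. Qed.

Lemma rsum_zero m F : (forall k, (k < m)%nat -> F k = 0) -> rsum m F = 0.
Proof. induction m; intros H; simpl. lra. rewrite IHm, H by (intros; try apply H; lia). lra. Qed.

Lemma rsum_le m F G : (forall k, (k < m)%nat -> F k <= G k) -> rsum m F <= rsum m G.
Proof. induction m; intros H; simpl. lra. pose proof (IHm ltac:(intros; apply H; lia)). pose proof (H m ltac:(lia)). lra. Qed.

Lemma rsum_comm m p F :
  rsum m (fun i => rsum p (fun j => F i j)) = rsum p (fun j => rsum m (fun i => F i j)).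
Proof.
  induction m; simpl.
  - symmetry. apply rsum_zero. reflexivity.
  - rewrite IHm. rewrite <- rsum_plus. reflexivity.
Qed.

Lemma nsq_nonneg d v : 0 <= nsq d v.
Proof. apply rsum_nonneg. intros; apply pow2_ge_0. Qed.

Lemma nsq_zero d v : nsq d v = 0 -> forall k, (k < d)%nat -> v k = 0.
Proof.
  intros H k Hk. pose proof (rsum_ge_term d (fun i => v i ^ 2) k ltac:(intros; apply pow2_ge_0) Hk).
  unfold nsq in H. rewrite H in H0. pose proof (pow2_ge_0 (v k)). nra.
Qed.

Lemma nsq_pos d v : Defs.nonzero d v -> 0 < nsq d v.
Proof.
  intros [k [Hk Hv]]. pose proof (rsum_ge_term d (fun i => v i ^ 2) k ltac:(intros; apply pow2_ge_0) Hk).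
  unfold nsq. assert (0 < v k ^ 2) by (simpl; nra). lra.
Qed.

Lemma nsq_one_nonzero d v : nsq d v = 1 -> Defs.nonzero d v.
Proof.
  intros H. destruct (Classical_Prop.classic (Defs.nonzero d v)) as [|Hn]; auto.
  exfalso. assert (nsq d v = 0). { apply rsum_zero. intros k Hk.
  destruct (Req_dec (v k) 0) as [E|E]. rewrite E; ring. exfalso; apply Hn; exists k; auto. }
  lra.
Qed.

Definition Bf (d : nat) (S : mat) (u v : vec) : R := rsum d (fun i => u i * mvec d S v i).

Lemma mvec_add d S u v i : mvec d S (fun k => u k + v k) i = mvec d S u i + mvec d S v i.
Proof. unfold mvec. rewrite <- rsum_plus. apply rsum_ext. intros; ring. Qed.
Lemma mvec_scal d S c v i : mvec d S (fun k => c * v k) i = c * mvec d S v i.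
Proof. unfold mvec. rewrite <- rsum_scal. apply rsum_ext. intros; ring. Qed.
Lemma mvec_mscale d S c v i : mvec d (mscale c S) v i = c * mvec d S v i.
Proof. unfold mvec, mscale. rewrite <- rsum_scal. apply rsum_ext. intros; ring. Qed.
Lemma mvec_madd d S T v i : mvec d (madd S T) v i = mvec d S v i + mvec d T v i.
Proof. unfold mvec, madd. rewrite <- rsum_plus. apply rsum_ext. intros; ring. Qed.

Lemma Bf_add_l d S u1 u2 v : Bf d S (fun k => u1 k + u2 k) v = Bf d S u1 v + Bf d S u2 v.
Proof. unfold Bf. rewrite <- rsum_plus. apply rsum_ext. intros; ring. Qed.
Lemma Bf_scal_l d S c u v : Bf d S (fun k => c * u k) v = c * Bf d S u v.
Proof. unfold Bf. rewrite <- rsum_scal. apply rsum_ext. intros; ring. Qed.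
Lemma Bf_add_r d S u v1 v2 : Bf d S u (fun k => v1 k + v2 k) = Bf d S u v1 + Bf d S u v2.
Proof. unfold Bf. rewrite <- rsum_plus. apply rsum_ext. intros. rewrite mvec_add. ring. Qed.
Lemma Bf_scal_r d S c u v : Bf d S u (fun k => c * v k) = c * Bf d S u v.
Proof. unfold Bf. rewrite <- rsum_scal. apply rsum_ext. intros. rewrite mvec_scal. ring. Qed.

Lemma Bf_tr d S u v : Bf d (mtr S) u v = Bf d S v u.
Proof.
  unfold Bf, mvec, mtr.
  transitivity (rsum d (fun i => rsum d (fun j => u i * S j i * v j))).
  { apply rsum_ext; intros. rewrite <- rsum_scal. apply rsum_ext; intros; ring. }
  rewrite rsum_comm.
  apply rsum_ext; intros. rewrite <- rsum_scal. apply rsum_ext; intros; ring.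
Qed.

Lemma Bf_sym d S u v : (forall i j, (i < d)%nat -> (j < d)%nat -> S i j = S j i) ->
  Bf d S u v = Bf d S v u.
Proof.
  intros H. rewrite <- Bf_tr. unfold Bf, mvec, mtr. apply rsum_ext; intros.
  f_equal. apply rsum_ext; intros. rewrite H by auto. reflexivity.
Qed.

Definition symm (d : nat) (S : mat) := forall i j, (i < d)%nat -> (j < d)%nat -> S i j = S j i.

Lemma nsq_expand d w r t : nsq d (fun k => w k + t * r k) =
  nsq d w + 2 * t * rsum d (fun k => w k * r k) + t ^ 2 * nsq d r.
Proof.
  unfold nsq. rewrite <- rsum_scal, <- rsum_scal, <- rsum_plus, <- rsum_plus.
  apply rsum_ext; intros; ring.
Qed.

Lemma Qf_expand d S w r t : symm d S ->
  Qf d S (fun k => w k + t * r k) = Qf d S w + 2 * t * Bf d S r w + t ^ 2 * Qf d S r.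
Proof.
  intros Hs. change (Qf d S (fun k => w k + t * r k)) with (Bf d S (fun k => w k + t * r k) (fun k => w k + t * r k)).
  rewrite (Bf_add_l d S w (fun k => t * r k)), Bf_scal_l.
  rewrite (Bf_add_r d S w w (fun k => t * r k)), Bf_scal_r.
  rewrite (Bf_add_r d S r w (fun k => t * r k)), Bf_scal_r.
  rewrite (Bf_sym d S w r Hs). unfold Qf. fold (Bf d S w w). fold (Bf d S r r). ring.
Qed.

Lemma lmin_props d S : (1 <= d)%nat -> symm d S ->
  (forall v, lambda_min d S * nsq d v <= Qf d S v) /\
  (exists w, nsq d w = 1 /\ Qf d S w = lambda_min d S) /\
  is_eigenvalue d S (lambda_min d S) /\
  (forall l, is_eigenvalue d S l -> lambda_min d S <= l).
Proof.
  intros Hd Hs. destruct (exists_min d S Hd) as [w [Hw Hmin]].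
  set (m := Qf d S w).
  assert (Hray : forall v, m * nsq d v <= Qf d S v).
  { intros v. destruct (Req_dec (nsq d v) 0) as [E|E].
    - rewrite E. assert (Qf d S v = 0). { unfold Qf. apply rsum_zero. intros k Hk.
        rewrite (nsq_zero d v E k Hk). ring. } lra.
    - pose proof (nsq_nonneg d v). assert (Np : 0 < nsq d v) by lra.
      pose proof (sqrt_lt_R0 _ Np) as Sp.
      set (c := / sqrt (nsq d v)).
      assert (Hc : c * c * nsq d v = 1).
      { unfold c. rewrite <- Rinv_mult, sqrt_sqrt by lra. field. lra. }
      assert (Hu : nsq d (fun k => c * v k) = 1).
      { rewrite <- Hc. unfold nsq. rewrite <- rsum_scal. apply rsum_ext. intros; ring. }
      pose proof (Hmin _ Hu) as H1.
      change (Qf d S (fun k => c * v k)) with (Bf d S (fun k => c * v k) (fun k => c * v k)) in H1.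
      rewrite Bf_scal_l, Bf_scal_r in H1. fold (Qf d S v) in H1.
      change (Bf d S v v) with (Qf d S v) in H1.
      apply Rmult_le_compat_r with (r := nsq d v) in H1; [|lra].
      replace (c * (c * Qf d S v) * nsq d v) with (Qf d S v * (c * c * nsq d v)) in H1 by ring.
      rewrite Hc in H1. unfold m. lra. }
  set (r := fun k => mvec d S w k - m * w k).
  set (N := nsq d r).
  set (P := rsum d (fun k => w k * r k)).
  assert (HB : Bf d S r w = m * P + N).
  { unfold Bf, N, P, nsq. rewrite <- rsum_scal, <- rsum_plus. apply rsum_ext; intros.
    unfold r. ring. }
  assert (Key : forall t, 0 <= 2 * t * N + t ^ 2 * (Qf d S r - m * N)).
  { intros t. pose proof (Hray (fun k => w k + t * r k)) as H1.
    rewrite nsq_expand, Qf_expand in H1 by auto. rewrite HB, Hw in H1.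
    fold N P in H1. unfold m in *. nra. }
  assert (N0 : N = 0).
  { pose proof (nsq_nonneg d r) as HN. fold N in HN.
    destruct (Req_dec N 0) as [|E]; auto. exfalso.
    set (K := Qf d S r - m * N). set (a := Rabs K + 1).
    assert (Ha : 0 < a) by (unfold a; pose proof (Rabs_pos K); lra).
    assert (HK : K - 2 * a < 0) by (unfold a; pose proof (Rle_abs K); pose proof (Rabs_pos K); lra).
    pose proof (Key (- N / a)) as H1. fold K in H1.
    replace (2 * (- N / a) * N + (- N / a) ^ 2 * K) with ((N * N / (a * a)) * (K - 2 * a)) in H1
      by (field; lra).
    assert (0 < N * N / (a * a)).
    { apply Rdiv_lt_0_compat; nra. }
    nra. }
  assert (Heig : is_eigenvalue d S m).
  { exists w. split. apply nsq_one_nonzero; auto.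
    intros i Hi. pose proof (nsq_zero d r N0 i Hi). unfold r in H. lra. }
  assert (Hminl : forall l, is_eigenvalue d S l -> m <= l).
  { intros l [u [Hu Hl]]. pose proof (Hray u).
    assert (Qf d S u = l * nsq d u).
    { unfold Qf, nsq. rewrite <- rsum_scal. apply rsum_ext. intros. rewrite Hl by auto. ring. }
    pose proof (nsq_pos d u Hu). nra. }
  assert (E : lambda_min d S = m).
  { unfold lambda_min.
    match goal with |- epsilon ?i ?P = _ =>
      assert (Hs' : P (epsilon i P)) by (apply epsilon_spec; exists m; split; auto) end.
    destruct Hs' as [He Hm]. pose proof (Hm m Heig). pose proof (Hminl _ He). lra. }
  rewrite E. split; auto. split; auto. exists w; auto.
Qed.

Lemma lmax_props d S : (1 <= d)%nat -> symm d S ->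
  (forall v, Qf d S v <= lambda_max d S * nsq d v) /\
  (exists w, nsq d w = 1 /\ Qf d S w = lambda_max d S).
Proof.
  intros Hd Hs. set (S' := mscale (-1) S).
  assert (Hs' : symm d S') by (intros i j Hi Hj; unfold S', mscale; rewrite Hs by auto; reflexivity).
  destruct (lmin_props d S' Hd Hs') as [Hray [[w [Hw Hq]] [Heig Hmin]]].
  set (m := lambda_min d S') in *.
  assert (HQ : forall v, Qf d S' v = - Qf d S v).
  { intros v. unfold Qf. rewrite <- (Rmult_1_l (rsum d (fun i => v i * mvec d S v i))).
    rewrite Ropp_mult_distr_l, <- rsum_scal. apply rsum_ext. intros.
    unfold S'. rewrite mvec_mscale. ring. }
  assert (Heig' : is_eigenvalue d S (- m)).
  { destruct Heig as [u [Hu Hl]]. exists u. split; auto. intros i Hi.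
    pose proof (Hl i Hi). unfold S' in H. rewrite mvec_mscale in H. lra. }
  assert (Hmax : forall l, is_eigenvalue d S l -> l <= - m).
  { intros l [u [Hu Hl]]. assert (is_eigenvalue d S' (- l)).
    { exists u. split; auto. intros i Hi. unfold S'. rewrite mvec_mscale, Hl by auto. ring. }
    pose proof (Hmin _ H). lra. }
  assert (E : lambda_max d S = - m).
  { unfold lambda_max.
    match goal with |- epsilon ?i ?P = _ =>
      assert (Hs2 : P (epsilon i P)) by (apply epsilon_spec; exists (- m); split; auto) end.
    destruct Hs2 as [He Hm]. pose proof (Hm _ Heig'). pose proof (Hmax _ He). lra. }
  rewrite E. split.
  - intros v. pose proof (Hray v). rewrite HQ in H. lra.
  - exists w. split; auto. rewrite HQ in Hq. lra.
Qed.

Lemma Qf_M d X v : Qf d (mmul d (mtr X) X) v = nsq d (mvec d X v).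
Proof.
  unfold Qf, nsq, mmul, mtr, mvec.
  transitivity (rsum d (fun i => rsum d (fun k => v i * X k i * rsum d (fun j => X k j * v j)))).
  { apply rsum_ext; intros i Hi.
    transitivity (v i * rsum d (fun j => rsum d (fun k => X k i * X k j * v j))).
    { f_equal. apply rsum_ext; intros j Hj. rewrite Rmult_comm, <- rsum_scal.
      apply rsum_ext; intros; ring. }
    rewrite rsum_comm, <- rsum_scal. apply rsum_ext; intros k Hk.
    rewrite <- rsum_scal, <- rsum_scal. apply rsum_ext; intros; ring. }
  rewrite rsum_comm. apply rsum_ext; intros k Hk.
  transitivity (rsum d (fun j => X k j * v j) * rsum d (fun i => X k i * v i)).
  { rewrite <- rsum_scal. apply rsum_ext; intros; ring. }
  ring.
Qed.

Lemma Qf_S1 d X v : Qf d (madd X (mtr X)) v = 2 * rsum d (fun i => v i * mvec d X v i).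
Proof.
  transitivity (Bf d X v v + Bf d (mtr X) v v).
  { unfold Qf, Bf. rewrite <- rsum_plus. apply rsum_ext; intros. rewrite mvec_madd. ring. }
  rewrite Bf_tr. unfold Bf. ring.
Qed.

Lemma symm_S1 d X : symm d (madd X (mtr X)).
Proof. intros i j _ _. unfold madd, mtr. ring. Qed.

Lemma symm_M d X : symm d (mmul d (mtr X) X).
Proof. intros i j _ _. unfold mmul, mtr. apply rsum_ext; intros; ring. Qed.

Lemma rsum_delta m i v : (i < m)%nat -> rsum m (fun j => (if Nat.eqb i j then 1 else 0) * v j) = v i.
Proof.
  induction m; intros H. lia. simpl.
  destruct (Nat.eq_dec i m).
  - subst. rewrite Nat.eqb_refl. rewrite rsum_zero. ring.
    intros k Hk. destruct (Nat.eqb_spec m k). lia. ring.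
  - rewrite IHm by lia. destruct (Nat.eqb_spec i m). lia. ring.
Qed.

Lemma nsq_A d X c v :
  nsq d (mvec d (madd mid (mscale (- c) X)) v) =
  nsq d v - c * Qf d (madd X (mtr X)) v + c ^ 2 * Qf d (mmul d (mtr X) X) v.
Proof.
  rewrite Qf_S1, Qf_M. unfold nsq.
  transitivity (rsum d (fun i => v i ^ 2) + rsum d (fun i => (- c * 2) * (v i * mvec d X v i))
    + rsum d (fun i => c ^ 2 * mvec d X v i ^ 2)).
  - rewrite <- !rsum_plus. apply rsum_ext; intros i Hi.
    rewrite mvec_madd, mvec_mscale. unfold mvec at 1, mid. rewrite rsum_delta by auto. ring.
  - rewrite !rsum_scal. ring.
Qed.

Definition e0 : vec := fun k => if Nat.eqb k 0 then 1 else 0.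
Lemma nsq_e0 d : (1 <= d)%nat -> nsq d e0 = 1.
Proof.
  intros H. apply rsum_e0; auto. unfold e0; simpl; ring.
  intros k Hk. unfold e0. destruct (Nat.eqb_spec k 0). lia. ring.
Qed.

Lemma spec_norm_bound d A B : (1 <= d)%nat ->
  (forall v, nsq d v = 1 -> nsq d (mvec d A v) <= B) -> 0 <= spec_norm d A <= sqrt B.
Proof.
  intros Hd HB.
  set (E := fun r => exists v, vnorm d v = 1 /\ r = vnorm d (mvec d A v)).
  assert (Hv : forall v, vnorm d v = 1 -> nsq d v = 1).
  { intros v H. unfold vnorm in H. fold (nsq d v) in H.
    pose proof (nsq_nonneg d v). rewrite <- (sqrt_sqrt (nsq d v)) by auto. rewrite H. ring. }
  assert (Hub : is_upper_bound E (sqrt B)).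
  { intros r [v [H1 H2]]. rewrite H2. unfold vnorm. apply sqrt_le_1_alt. apply HB. auto. }
  assert (He0 : E (vnorm d (mvec d A e0))).
  { exists e0. split; auto. unfold vnorm. fold (nsq d e0). rewrite nsq_e0 by auto. apply sqrt_1. }
  unfold spec_norm. fold E.
  assert (Hs : is_lub E (epsilon (inhabits 0) (is_lub E))).
  { apply epsilon_spec. destruct (completeness E) as [m Hm]. exists (sqrt B); auto.
    exists (vnorm d (mvec d A e0)); auto. exists m; auto. }
  destruct Hs as [Hs1 Hs2]. split.
  - apply Rle_trans with (vnorm d (mvec d A e0)). apply sqrt_pos. apply Hs1; auto.
  - apply Hs2; auto.
Qed.

Lemma rprod_nonneg m F : (forall k, (k < m)%nat -> 0 <= F k) -> 0 <= rprod m F.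
Proof. induction m; intros H; simpl. lra. apply Rmult_le_pos. apply IHm; intros; apply H; lia. apply H; lia. Qed.

Lemma rprod_le m F G : (forall k, (k < m)%nat -> 0 <= F k <= G k) -> rprod m F <= rprod m G.
Proof.
  induction m; intros H; simpl. lra.
  apply Rmult_le_compat. apply rprod_nonneg; intros; apply H; lia. apply H; lia.
  apply IHm; intros; apply H; lia. apply H; lia.
Qed.

Lemma rprod_mult m F G : rprod m (fun k => F k * G k) = rprod m F * rprod m G.
Proof. induction m; simpl. ring. rewrite IHm. ring. Qed.

Lemma rprod_exp m F : rprod m (fun k => exp (F k)) = exp (rsum m F).
Proof. induction m; simpl. rewrite exp_0. ring. rewrite IHm, exp_plus. ring. Qed.

Lemma rr_empty i n f : (n < i)%nat -> rprod_range i n f = 1.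
Proof. intros H. unfold rprod_range. replace (S n - i)%nat with 0%nat by lia. reflexivity. Qed.

Lemma rr_S i n f : (i <= S n)%nat -> rprod_range i (S n) f = rprod_range i n f * f (S n).
Proof.
  intros H. unfold rprod_range. replace (S (S n) - i)%nat with (S (S n - i)) by lia.
  change (rprod (S (S n - i)) (fun j => f (i + j)%nat)) with
    (rprod (S n - i) (fun j => f (i + j)%nat) * f (i + (S n - i))%nat).
  replace (i + (S n - i))%nat with (S n) by lia. reflexivity.
Qed.

Lemma rr_nonneg i n f : (forall k, 0 <= f k) -> 0 <= rprod_range i n f.
Proof. intros H. apply rprod_nonneg. intros; apply H. Qed.

Lemma cprod_eq (E : nat -> R) K i n : (forall k, 0 <= E k) ->
  rprod_range i n (fun k => if Nat.leb k K then sqrt (E k) else 1) =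
  sqrt (rprod_range i (Nat.min n K) E).
Proof.
  intros HE. induction n.
  - destruct i.
    + simpl. unfold rprod_range. simpl. replace (Nat.min 0 K) with 0%nat by lia. simpl.
      rewrite !Rmult_1_l. reflexivity.
    + rewrite !rr_empty by lia. rewrite sqrt_1. reflexivity.
  - destruct (Nat.le_gt_cases i (S n)).
    + rewrite rr_S by auto. rewrite IHn.
      destruct (Nat.leb_spec (S n) K).
      * replace (Nat.min (S n) K) with (S n) by lia. replace (Nat.min n K) with n by lia.
        rewrite rr_S by auto. rewrite sqrt_mult; auto. apply rr_nonneg; auto.
      * replace (Nat.min (S n) K) with (Nat.min n K) by lia. ring.
    + rewrite !rr_empty by lia. rewrite sqrt_1. reflexivity.
Qed.

Lemma rmax_ge m f k : (k <= m)%nat -> f k <= rmax_upto m f.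
Proof.
  induction m; intros H; simpl. replace k with 0%nat by lia. lra.
  destruct (Nat.eq_dec k (S m)). subst. apply Rmax_r.
  eapply Rle_trans. apply IHm; lia. apply Rmax_l.
Qed.

Lemma exp_le x y : x <= y -> exp x <= exp y.
Proof. intros H. destruct (Rle_lt_or_eq_dec _ _ H). left; apply exp_increasing; auto. subst; lra. Qed.

Lemma ln_le x y : 0 < x -> x <= y -> ln x <= ln y.
Proof. intros H H'. destruct (Rle_lt_or_eq_dec _ _ H'). left; apply ln_increasing; auto. subst; lra. Qed.

Lemma natceil_ge x : x <= INR (natceil x).
Proof.
  unfold natceil. destruct (base_Int_part (- x)) as [H1 _].
  set (z := (- Int_part (- x))%Z).
  assert (x <= IZR z) by (unfold z; rewrite opp_IZR; lra).
  destruct (Z.le_gt_cases 0 z).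
  - rewrite INR_IZR_INZ, Z2Nat.id by auto. auto.
  - pose proof (pos_INR (Z.to_nat z)). assert (IZR z < 0) by (apply IZR_lt; lia). lra.
Qed.

Lemma gam_pos g k : 0 < gam g k.
Proof. unfold gam, Rpower. apply exp_pos. Qed.

Lemma gam_le1 g k : 0 < g -> gam g k <= 1.
Proof.
  intros Hg. unfold gam, Rpower. apply Rle_trans with (exp 0); [apply exp_le | rewrite exp_0; lra].
  pose proof (pos_INR k). assert (0 <= ln (INR k + 1)). { rewrite <- ln_1. apply ln_le; lra. }
  nra.
Qed.

Lemma gam_small g L lmax k : 0 < g -> 0 < L -> 0 < lmax ->
  (natceil (Rpower (lmax / L) (1 / g)) <= k)%nat -> gam g k * lmax <= L.
Proof.
  intros Hg HL Hm Hk.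
  set (r := Rpower (lmax / L) (1 / g)).
  assert (Hr : 0 < r) by (unfold r, Rpower; apply exp_pos).
  pose proof (natceil_ge r). apply le_INR in Hk. fold r in Hk.
  assert (r <= INR k + 1) by lra.
  assert (ln r <= ln (INR k + 1)) by (apply ln_le; auto).
  assert (Hlr : ln r = (1 / g) * ln (lmax / L)) by (unfold r, Rpower; apply ln_exp).
  assert (g * ln (INR k + 1) >= ln (lmax / L)).
  { rewrite Hlr in H1. apply Rle_ge. apply Rmult_le_compat_l with (r := g) in H1; [|lra].
    replace (g * (1 / g * ln (lmax / L))) with (ln (lmax / L)) in H1 by (field; lra). auto. }
  unfold gam, Rpower.
  assert (exp (- g * ln (INR k + 1)) <= exp (- ln (lmax / L))) by (apply exp_le; lra).
  rewrite exp_Ropp, exp_ln in H3 by (apply Rdiv_lt_0_compat; auto).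
  replace L with (/ (lmax / L) * lmax) by (field; lra).
  apply Rmult_le_compat_r; lra.
Qed.

Theorem mainTheorem7 (d : nat) (X : mat) (g : R) :
  (1 <= d)%nat ->
  pos_def d (madd X (mtr X)) ->
  0 < g < 1 ->
  let lmin := lambda_min d (madd X (mtr X)) in
  let lmax := lambda_max d (mmul d (mtr X) X) in
  let q := lmin / 4 in
  let mu := - lmin + lmax in
  let K := natceil (Rpower (lmax / (lmin - 2 * q)) (1 / g)) in
  let C := Rmax 1 (sqrt (rmax_upto K (fun l2 => rmax_upto l2 (fun l1 =>
              rprod_range l1 l2 (fun l => exp (gam g l * (mu + 2 * q))))))) in
  forall i n : nat, (i <= n)%nat ->
    rprod_range i n (fun k => spec_norm d (madd mid (mscale (- gam g k) X)))
      <= C * exp (- q * rsum_range i n (gam g)).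
Proof.
  intros Hd Hpd Hg lmin lmax q mu K C i n Hin.
  destruct (lmin_props d (madd X (mtr X)) Hd (symm_S1 d X)) as [Hr1 [[w1 [Hw1 Hq1]] _]].
  fold lmin in Hr1, Hq1.
  assert (Hlmin : 0 < lmin).
  { rewrite <- Hq1. exact (Hpd w1 (nsq_one_nonzero d w1 Hw1)). }
  destruct (lmax_props d (mmul d (mtr X) X) Hd (symm_M d X)) as [HrM [wM [HwM HqM]]].
  fold lmax in HrM, HqM.
  assert (Hlmax : 0 <= lmax) by (rewrite <- HqM, Qf_M; apply nsq_nonneg).
  assert (Hk : forall k, 0 <= spec_norm d (madd mid (mscale (- gam g k) X)) <=
                sqrt (exp (- gam g k * lmin + gam g k ^ 2 * lmax))).
  { intros k. apply spec_norm_bound; auto. intros v Hv. rewrite nsq_A, Hv.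
    pose proof (gam_pos g k). pose proof (Hr1 v) as H1. pose proof (HrM v) as H2.
    rewrite Hv in H1, H2.
    apply Rle_trans with (1 + (- gam g k * lmin + gam g k ^ 2 * lmax)); [|apply exp_ineq1_le].
    assert (0 <= gam g k ^ 2) by apply pow2_ge_0. nra. }
  set (E := fun l => exp (gam g l * (mu + 2 * q))).
  set (c := fun k => if Nat.leb k K then sqrt (E k) else 1).
  assert (Hck : forall k, 0 <= spec_norm d (madd mid (mscale (- gam g k) X)) <=
                 c k * exp (- q * gam g k)).
  { intros k. destruct (Hk k) as [H0 H1]. split; auto. eapply Rle_trans; [apply H1|].
    pose proof (gam_pos g k) as G0. pose proof (gam_le1 g k ltac:(lra)) as G1.
    set (y := gam g k) in *.
    unfold c. destruct (Nat.leb_spec k K).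
    - rewrite <- (sqrt_square (exp (- q * y))) by (left; apply exp_pos).
      rewrite <- sqrt_mult by (left; apply exp_pos || (apply Rmult_lt_0_compat; apply exp_pos)).
      apply sqrt_le_1_alt. unfold E. rewrite <- !exp_plus. apply exp_le.
      unfold mu, q. simpl. fold y. assert (Hyl : 0 <= y * lmax) by nra. pose proof (Rmult_le_pos (1 - y) (y * lmax) ltac:(lra) Hyl). nra.
    - assert (HL : y * y * lmax <= y * (lmin - 2 * q)).
      { destruct (Rle_lt_or_eq_dec 0 lmax Hlmax) as [Hp|Hz].
        - assert (y * lmax <= lmin - 2 * q).
          { apply gam_small; auto. lra. unfold q; lra. unfold K in H. lia. }
          nra.
        - rewrite <- Hz. unfold q. nra. }
      rewrite Rmult_1_l.
      rewrite <- (sqrt_square (exp (- q * y))) by (left; apply exp_pos).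
      apply sqrt_le_1_alt. rewrite <- exp_plus. apply exp_le. simpl. nra. }
  apply Rle_trans with (rprod_range i n (fun k => c k * exp (- q * gam g k))).
  { unfold rprod_range. apply rprod_le. intros; apply Hck. }
  unfold rprod_range at 1. rewrite rprod_mult. rewrite rprod_exp.
  rewrite (rsum_scal _ (- q) (fun j => gam g (i + j)%nat)).
  change (rsum (S n - i) (fun j => gam g (i + j)%nat)) with (rsum_range i n (gam g)).
  change (rprod (S n - i) (fun j => c (i + j)%nat)) with (rprod_range i n c).
  apply Rmult_le_compat_r. left; apply exp_pos.
  unfold c. rewrite cprod_eq by (intros; unfold E; left; apply exp_pos).
  unfold C. destruct (Nat.le_gt_cases i (Nat.min n K)).
  - eapply Rle_trans; [|apply Rmax_r]. apply sqrt_le_1_alt.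
    eapply Rle_trans; [|apply (rmax_ge K _ (Nat.min n K)); lia].
    apply (rmax_ge (Nat.min n K) (fun l1 => rprod_range l1 (Nat.min n K) E) i). lia.
  - rewrite rr_empty by lia. rewrite sqrt_1. apply Rmax_l.
Qed.
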